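(* (a) The cell $S_{z_1,z_1}$ is the disjoint union of exactly three $G$-orbits of points $(P,Pz_1,Pz_1n)$: $n=n(1,0,0)$, dimension $7$, stabilizer $\{d(a,a,1/a^2):a\in\mathbb{R}^\times\}$; $n=n(0,1,0)$, dimension $6$, stabilizer $\left\{\begin{pmatrix}a&0&0\\0&1/a^2&x\\0&0&a\end{pmatrix}:a\in\mathbb{R}^\times,x\in\mathbb{R}\right\}$; $n=n(0,0,0)$, dimension $5$, stabilizer $D\cdot\{n(0,0,x):x\in\mathbb{R}\}$. (b) The cell $S_{z_1,z_2}$ is the disjoint union of exactly two $G$-orbits of points $(P,Pz_1,Pz_2n)$: $n=n(0,1,0)$, dimension $7$, stabilizer $\{d(a,1/a^2,a):a\in\mathbb{R}^\times\}$; $n=n(0,0,0)$, dimension $6$, stabilizer $D$. (c) The cell $S_{z_1,s_1}$ is the disjoint union of exactly two $G$-orbits of points $(P,Pz_1,Ps_1n)$: $n=n(1,0,0)$, dimension $6$, stabilizer $\left\{\begin{pmatrix}a&0&0\\0&a&x\\0&0&1/a^2\end{pmatrix}:a\in\mathbb{R}^\times,x\in\mathbb{R}\right\}$; $n=n(0,0,0)$, dimension $5$, stabilizer $D\cdot\{n(0,0,x):x\in\mathbb{R}\}$. (d) The cell $S_{z_1,s_2}$ is a single $G$-orbit, that of $(P,Pz_1,Ps_2)$, of dimension $6$ with stabilizer $D$. (e) The cell $S_{z_1,1}$ is a single $G$-orbit, that of $(P,Pz_1,P)$, of dimension $5$ with stabilizer $D\cdot\{n(0,0,x):x\in\mathb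b{R}\}$.
   Context: $G=\mathrm{SL}_3(\mathbb{R})$, $P$ the upper triangular matrices in $G$, $D$ the diagonal matrices in $G$; $G$ acts on $X=(P\backslash G)^3$ by right multiplication in each coordinate. $n(x,y,z)=\begin{pmatrix}1&x&y\\0&1&z\\0&0&1\end{pmatrix}$, $d(a,b,c)=\operatorname{diag}(a,b,c)$. $1$ is the identity matrix, $s_1=\begin{pmatrix}0&1&0\\1&0&0\\0&0&-1\end{pmatrix}$, $s_2=\begin{pmatrix}-1&0&0\\0&0&1\\0&1&0\end{pmatrix}$, $z_1=\begin{pmatrix}0&-1&0\\0&0&-1\\1&0&0\end{pmatrix}$, $z_2=\begin{pmatrix}0&0&1\\-1&0&0\\0&-1&0\end{pmatrix}$. $S_{v,w}=\big(\{P\}\times P\backslash PvP\times P\backslash PwP\big)\cdot G$. The stabilizer of $(P,Pv,Pwn)$ is $P\cap v^{-1}Pv\cap (wn)^{-1}P(wn)$. *)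

(* Defs.v *)
From HB Require Import structures.
From mathcomp Require Import all_boot all_order all_algebra.
From mathcomp Require Import all_classical all_reals topology normedtype sequences.
Set Implicit Arguments. Unset Strict Implicit. Unset Printing Implicit Defensive.
Import Order.TTheory GRing.Theory Num.Theory.
Import numFieldNormedType.Exports.
Local Open Scope classical_set_scope.
Local Open Scope ring_scope.

Section Defs.
Variable R : realType.
Notation M := 'M[R]_3.

Definition mx3 (a11 a12 a13 a21 a22 a23 a31 a32 a33 : R) : M :=
  \matrix_(i < 3, j < 3)
    nth 0 (nth [::] [:: [:: a11; a12; a13]; [:: a21; a22; a23];
                        [:: a31; a32; a33]] i) j.

Definition inG (g : M) : Prop := \det g = 1.
Definition inP (p : M) : Prop :=
  inG p /\ forall i j : 'I_3, (j < i)%N -> p i j = 0.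
Definition inD (d : M) : Prop :=
  inG d /\ forall i j : 'I_3, i != j -> d i j = 0.

Definition nn (x y z : R) : M := mx3 1 x y 0 1 z 0 0 1.
Definition dd (a b c : R) : M := mx3 a 0 0 0 b 0 0 0 c.

Definition s1 : M := mx3 0 1 0 1 0 0 0 0 (-1).
Definition s2 : M := mx3 (-1) 0 0 0 0 1 0 1 0.
Definition z1 : M := mx3 0 (-1) 0 0 0 (-1) 1 0 0.
Definition z2 : M := mx3 0 0 1 (-1) 0 0 0 (-1) 0.

(* Right cosets P g (g in G): P g = P h  iff  h g^-1 in P. *)
Definition coset_eq (g h : M) : Prop :=
  inG g /\ inG h /\ inP (h *m invmx g).

(* A point of X = (P\G)^3 is represented by a triple of elements of G;
   two triples represent the same point iff the cosets agree. *)
Definition triple := (M * M * M)%type.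
Definition xeq (x y : triple) : Prop :=
  coset_eq x.1.1 y.1.1 /\ coset_eq x.1.2 y.1.2 /\ coset_eq x.2 y.2.

Definition act (x : triple) (g : M) : triple :=
  (x.1.1 *m g, x.1.2 *m g, x.2 *m g).

Definition pt (v w : M) : triple := (1%:M, v, w).

Definition Gorbit (x : triple) : set triple :=
  [set y | exists g, inG g /\ xeq y (act x g)].

Definition stab (x : triple) : set M :=
  [set g | inG g /\ xeq (act x g) x].

Definition inPvP (v a : M) : Prop :=
  exists p q, inP p /\ inP q /\ a = p *m v *m q.

(* the cell S_{v,w} = ({P} x P\PvP x P\PwP) . G *)
Definition cell (v w : M) : set triple :=
  [set y | exists a b g, inG a /\ inG b /\ inG g /\ inPvP v a /\ inPvP w b /\
                         xeq y (act (1%:M, a, b) g)].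

(* Tangent cone at 1 of a set H of matrices (for a closed subgroup of
   GL_3(R), this is its Lie algebra). *)
Definition lie (H : set M) : set M :=
  [set X | exists (u : nat -> M) (t : nat -> R),
     (forall k, H (u k)) /\ (forall k, 0 < t k) /\ t @ \oo --> (0 : R) /\
     forall i j : 'I_3,
       (fun k => (u k i j - (1%:M : M) i j) / t k) @ \oo --> X i j].

Definition set_dim (S : set M) (n : nat) : Prop :=
  (exists s : seq M, size s = n /\ free s /\ forall X, X \in s -> S X) /\
  (forall s : seq M, free s -> (forall X, X \in s -> S X) -> (size s <= n)%N).

(* the orbit of x has dimension d = dim G - dim Stab(x), dim G = 8 *)
Definition orbit_dim (x : triple) (d : nat) : Prop :=
  exists k, set_dim (lie (stab x)) k /\ (d + k = 8)%N.

End Defs.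

Arguments s1 {R}.
Arguments s2 {R}.
Arguments z1 {R}.
Arguments z2 {R}.

(* Main.v *)
Require Import Defs.
From HB Require Import structures.
From mathcomp Require Import all_boot all_order all_algebra.
From mathcomp Require Import all_classical all_reals topology normedtype sequences.
From mathcomp Require Import ring lra.
Import Order.TTheory GRing.Theory Num.Theory.
Import numFieldNormedType.Exports.
Set Implicit Arguments. Unset Strict Implicit. Unset Printing Implicit Defensive.
Local Open Scope classical_set_scope.
Local Open Scope ring_scope.

Section Base.
Variable R : realType.
Notation M := 'M[R]_3.
Definition i0 : 'I_3 := @Ordinal 3 0 isT.
Definition i1 : 'I_3 := @Ordinal 3 1 isT.
Definition i2 : 'I_3 := @Ordinal 3 2 isT.

Lemma mx3_eta (A : M) : A = mx3 (A i0 i0) (A i0 i1) (A i0 i2) (A i1 i0) (A i1 i1) (A i1 i2) (A i2 i0) (A i2 i1) (A i2 i2).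
Proof.
apply/matrixP => i j; rewrite mxE.
case: i => [[|[|[|i]]] Hi] //; case: j => [[|[|[|j]]] Hj] //=; congr (A _ _); exact: val_inj.
Qed.

Lemma mul_mx3 (a11 a12 a13 a21 a22 a23 a31 a32 a33 b11 b12 b13 b21 b22 b23 b31 b32 b33 : R) :
  mx3 a11 a12 a13 a21 a22 a23 a31 a32 a33 *m mx3 b11 b12 b13 b21 b22 b23 b31 b32 b33 =
  mx3 (a11*b11 + a12*b21 + a13*b31) (a11*b12 + a12*b22 + a13*b32) (a11*b13 + a12*b23 + a13*b33)
      (a21*b11 + a22*b21 + a23*b31) (a21*b12 + a22*b22 + a23*b32) (a21*b13 + a22*b23 + a23*b33)
      (a31*b11 + a32*b21 + a33*b31) (a31*b12 + a32*b22 + a33*b32) (a31*b13 + a32*b23 + a33*b33).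
Proof.
apply/matrixP => i j; rewrite !mxE !big_ord_recr big_ord0 /= !mxE /= add0r.
by case: i => [[|[|[|i]]] Hi] //; case: j => [[|[|[|j]]] Hj] //=.
Qed.

Lemma det_mx3 (a11 a12 a13 a21 a22 a23 a31 a32 a33 : R) :
  \det (mx3 a11 a12 a13 a21 a22 a23 a31 a32 a33) =
  a11*(a22*a33 - a23*a32) - a12*(a21*a33 - a23*a31) + a13*(a21*a32 - a22*a31).
Proof.
rewrite (expand_det_row _ i0) /cofactor !big_ord_recr !big_ord0 /=.
rewrite !(expand_det_row _ ord0) /cofactor !big_ord_recr !big_ord0 /=.
rewrite !det_mx11 !mxE /=.
ring.
Qed.

Lemma mx3_inj (a11 a12 a13 a21 a22 a23 a31 a32 a33 b11 b12 b13 b21 b22 b23 b31 b32 b33 : R) :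
  mx3 a11 a12 a13 a21 a22 a23 a31 a32 a33 = mx3 b11 b12 b13 b21 b22 b23 b31 b32 b33 ->
  a11 = b11 /\ a12 = b12 /\ a13 = b13 /\ a21 = b21 /\ a22 = b22 /\ a23 = b23 /\ a31 = b31 /\ a32 = b32 /\ a33 = b33.
Proof.
move/matrixP => H.
have := H i0 i0; have := H i0 i1; have := H i0 i2; have := H i1 i0; have := H i1 i1;
have := H i1 i2; have := H i2 i0; have := H i2 i1; have := H i2 i2; rewrite !mxE /=.
by move=> *; repeat split.
Qed.


Lemma mx3_ex (A : M) : exists a11 a12 a13 a21 a22 a23 a31 a32 a33,
  A = mx3 a11 a12 a13 a21 a22 a23 a31 a32 a33.
Proof. by do 9 eexists; exact: mx3_eta. Qed.

Lemma inP_mx3 (a11 a12 a13 a21 a22 a23 a31 a32 a33 : R) :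
  inP (mx3 a11 a12 a13 a21 a22 a23 a31 a32 a33) <->
  (a11 * a22 * a33 = 1 /\ a21 = 0 /\ a31 = 0 /\ a32 = 0).
Proof.
rewrite /inP /inG det_mx3; split.
- move=> [Hd Hl].
  have h10 := Hl i1 i0 isT; have h20 := Hl i2 i0 isT; have h21 := Hl i2 i1 isT.
  move: h10 h20 h21; rewrite !mxE /= => h10 h20 h21.
  rewrite h10 h20 h21 in Hd; split=> //; rewrite -Hd; ring.
- move=> [Hd [h10 [h20 h21]]]; split.
  + rewrite h10 h20 h21 -Hd; ring.
  + move=> i j; rewrite mxE.
    by case: i => [[|[|[|i]]] Hi] //; case: j => [[|[|[|j]]] Hj] //=.
Qed.

Lemma inG_mx3 (a11 a12 a13 a21 a22 a23 a31 a32 a33 : R) :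
  inG (mx3 a11 a12 a13 a21 a22 a23 a31 a32 a33) <->
  a11*(a22*a33 - a23*a32) - a12*(a21*a33 - a23*a31) + a13*(a21*a32 - a22*a31) = 1.
Proof. by rewrite /inG det_mx3. Qed.

Lemma inG_unit (g : M) : inG g -> g \in unitmx.
Proof. by rewrite /inG unitmxE => ->; exact: unitr1. Qed.

Lemma inP_G (p : M) : inP p -> inG p.
Proof. by case. Qed.

Lemma inG_mul (g h : M) : inG g -> inG h -> inG (g *m h).
Proof. by rewrite /inG det_mulmx => -> ->; rewrite mulr1. Qed.

Lemma inG_inv (g : M) : inG g -> inG (invmx g).
Proof. by rewrite /inG det_inv => ->; rewrite invr1. Qed.

Lemma inP_mul (p q : M) : inP p -> inP q -> inP (p *m q).
Proof.
case: (mx3_ex p) => ? [? [? [? [? [? [? [? [? ->]]]]]]]].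
case: (mx3_ex q) => ? [? [? [? [? [? [? [? [? ->]]]]]]]].
rewrite mul_mx3 !inP_mx3 => -[h1 [-> [-> ->]]] [h2 [-> [-> ->]]].
split; last by split; [ring| split; ring].
rewrite -[1]mulr1 -{1}h1 -h2; ring.
Qed.

Lemma inP_1 : inP (1%:M : M).
Proof. split; first exact: det1. move=> i j Hij; rewrite mxE; case: eqP => // e; by rewrite e ltnn in Hij. Qed.

Lemma inP_inv (p : M) : inP p -> inP (invmx p).
Proof.
move=> Hp; have Hu := inG_unit (inP_G Hp).
have H := mulVmx Hu. split; first exact: inG_inv (inP_G Hp).
move: H Hp; set q := invmx p.
case: (mx3_ex p) => a11 [a12 [a13 [a21 [a22 [a23 [a31 [a32 [a33 ->]]]]]]]].
case: (mx3_ex q) => b11 [b12 [b13 [b21 [b22 [b23 [b31 [b32 [b33 ->]]]]]]]].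
rewrite mul_mx3 inP_mx3 => H [hd [h21 [h31 h32]]].
have e1 : (1%:M : M) = mx3 1 0 0 0 1 0 0 0 1.
  by apply/matrixP => i j; rewrite !mxE; case: i => [[|[|[|i]]] Hi] //; case: j => [[|[|[|j]]] Hj].
rewrite e1 in H; have [_ [_ [_ [q21 [_ [_ [q31 [q32 _]]]]]]]] := mx3_inj H.
subst.
have a11n : a11 != 0 by apply/eqP => h; move: hd; rewrite h !mul0r => /eqP; rewrite eq_sym oner_eq0.
have a22n : a22 != 0 by apply/eqP => h; move: hd; rewrite h mulr0 !mul0r => /eqP; rewrite eq_sym oner_eq0.
have b21z : b21 = 0 by apply/eqP; move: q21; rewrite !mulr0 !addr0 => /eqP; rewrite mulf_eq0 (negbTE a11n) orbF.
have b31z : b31 = 0 by apply/eqP; move: q31; rewrite !mulr0 !addr0 => /eqP; rewrite mulf_eq0 (negbTE a11n) orbF.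
subst; have b32z : b32 = 0 by apply/eqP; move: q32; rewrite !mul0r !mulr0 !add0r !addr0 => /eqP; rewrite mulf_eq0 (negbTE a22n) orbF.
move=> i j; rewrite !mxE; case: i => [[|[|[|i]]] Hi] //; case: j => [[|[|[|j]]] Hj] //=.
Qed.

End Base.
Arguments inP_1 {R}.

Section Gen.
Variable R : realType.
Notation M := 'M[R]_3.
Implicit Types g h k p q v w n : M.

Lemma ce_iff g h : coset_eq g h <-> inG g /\ inG h /\ exists p, inP p /\ h = p *m g.
Proof.
rewrite /coset_eq; split.
- move=> [Hg [Hh Hp]]; do 2 split => //; exists (h *m invmx g); split => //.
  by rewrite mulmxKV //; exact: inG_unit.
- move=> [Hg [Hh [p [Hp eh]]]]; split => //; split => //.
  by rewrite eh mulmxK //; exact: inG_unit.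
Qed.

Lemma ce_sym g h : coset_eq g h -> coset_eq h g.
Proof.
move=> /ce_iff [Hg [Hh [p [Hp e]]]]; apply/ce_iff; do 2 split => //.
exists (invmx p); split; first exact: inP_inv.
by rewrite e mulmxA mulVmx ?mul1mx //; apply: inG_unit; case: Hp.
Qed.

Lemma ce_trans g h k : coset_eq g h -> coset_eq h k -> coset_eq g k.
Proof.
move=> /ce_iff [Hg [Hh [p [Hp e1]]]] /ce_iff [_ [Hk [q [Hq e2]]]].
apply/ce_iff; do 2 split => //; exists (q *m p); split; first exact: inP_mul.
by rewrite e2 e1 mulmxA.
Qed.

Lemma ce_mulr g h k : coset_eq g h -> inG k -> coset_eq (g *m k) (h *m k).
Proof.
move=> /ce_iff [Hg [Hh [p [Hp e]]]] Hk; apply/ce_iff; split; first exact: inG_mul.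
split; first exact: inG_mul. by exists p; split => //; rewrite e mulmxA.
Qed.

Lemma ce_P g p : inG g -> inP p -> coset_eq g (p *m g).
Proof.
move=> Hg Hp; apply/ce_iff; split => //; split; last by exists p.
by apply: inG_mul => //; case: Hp.
Qed.

Lemma ce_refl g : inG g -> coset_eq g g.
Proof. by move=> Hg; have := ce_P Hg inP_1; rewrite mul1mx. Qed.

Lemma mulr_cancel g (A B : M) : inG g -> A *m g = B *m g -> A = B.
Proof.
move=> /inG_unit Hu e; by rewrite -(mulmxK Hu A) e mulmxK.
Qed.

Lemma inG1 : inG (1%:M : M). Proof. exact: det1. Qed.

Lemma orbit_sub_cell v w n : inG v -> inG w -> inP n ->
  Gorbit (pt v (w *m n)) `<=` cell v w.
Proof.
move=> Hv Hw Hn y [g [Hg Hy]].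
exists v, (w *m n), g; split => //; split; first by apply: inG_mul => //; case: Hn.
split => //; split; first by exists 1%:M, 1%:M; split; [exact: inP_1| split; [exact: inP_1|]]; rewrite mulmx1 mul1mx.
split; first by exists 1%:M, n; split; [exact: inP_1| split=> //]; rewrite mul1mx.
by move: Hy; rewrite /act /pt /=.
Qed.

Lemma cell_sub v w (N : M -> Prop) : inG v -> inG w -> (forall n, N n -> inG n) ->
  (forall r, inP r -> exists n, N n /\ exists c p p', inP c /\ inP p /\ inP p' /\
       v *m c = p' *m v /\ w *m r = p *m (w *m n) *m c) ->
  cell v w `<=` [set y | exists n, N n /\ Gorbit (pt v (w *m n)) y].
Proof.
move=> Hv Hw HN Hcov y [a [b [g [Ha [Hb [Hg [[p [q [Hp [Hq ea]]]] [[p1 [q1 [Hp1 [Hq1 eb]]]] Hy]]]]]]]].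
have Hqu := inG_unit (inP_G Hq).
have Hr : inP (q1 *m invmx q) by apply: inP_mul => //; exact: inP_inv.
have [n [Nn [c [p2 [p3 [Hc [Hp2 [Hp3 [e1 e2]]]]]]]]] := Hcov _ Hr.
exists n; split => //.
have Hcq : inP (c *m q) by exact: inP_mul.
have Hh : inG (c *m q *m g) by apply: inG_mul => //; exact: inP_G.
exists (c *m q *m g); split => //.
move: Hy; rewrite /xeq /act /pt /= !mul1mx => -[Y1 [Y2 Y3]]; split; [|split].
- apply: ce_trans Y1 _; exact: ce_P.
- apply: ce_trans Y2 _.
  have Hvqg : inG (v *m (q *m g)) by apply: inG_mul => //; apply: inG_mul => //; exact: inP_G.
  rewrite ea -!mulmxA; apply: ce_trans (ce_sym (ce_P Hvqg Hp)) _.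
  by rewrite !mulmxA e1 -!mulmxA; apply: ce_P => //; rewrite !mulmxA.
- apply: ce_trans Y3 _.
  have Hwqg : inG (w *m (q1 *m g)) by apply: inG_mul => //; apply: inG_mul => //; exact: inP_G.
  rewrite eb -!mulmxA; apply: ce_trans (ce_sym (ce_P Hwqg Hp1)) _.
  have -> : q1 = q1 *m invmx q *m q by rewrite mulmxKV.
  rewrite !mulmxA; rewrite !mulmxA in e2; rewrite e2 -!mulmxA.
  apply: ce_sym; apply: ce_P => //.
  apply: inG_mul => //; apply: inG_mul; first exact: HN.
  by rewrite !mulmxA.
Qed.

Lemma orbit_disj v w n n' :
  (forall c p p', inP c -> inP p -> inP p' -> v *m c = p *m v ->
      w *m n' *m c = p' *m (w *m n) -> False) ->
  Gorbit (pt v (w *m n)) `&` Gorbit (pt v (w *m n')) = set0.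
Proof.
move=> Hno; apply/seteqP; split => // y [[g [Hg Hy]] [g' [Hg' Hy']]].
move: Hy Hy'; rewrite /xeq /act /pt /= !mul1mx => -[Y1 [Y2 Y3]] [Z1 [Z2 Z3]].
have /ce_iff [_ [_ [c [Hc ec]]]] := ce_trans (ce_sym Y1) Z1.
have /ce_iff [_ [_ [p [Hp ep]]]] := ce_trans (ce_sym Y2) Z2.
have /ce_iff [_ [_ [p' [Hp' ep']]]] := ce_trans (ce_sym Y3) Z3.
apply: (Hno c p p') => //.
- by apply: (mulr_cancel Hg); rewrite -mulmxA -ec -mulmxA.
- by apply: (mulr_cancel Hg); rewrite -[w *m n' *m c *m g]mulmxA -ec ep' mulmxA.
Qed.

Lemma stab_iff v u g : inG v -> inG u ->
  (stab (pt v u) g <-> inP g /\ (exists p, inP p /\ v *m g = p *m v) /\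
                       (exists p, inP p /\ u *m g = p *m u)).
Proof.
move=> Hv Hu; rewrite /stab /xeq /act /pt /= mul1mx; split.
- move=> [Hg [Y1 [Y2 Y3]]].
  have /ce_iff [_ [_ [p1 [Hp1 e1]]]] := ce_sym Y1.
  have /ce_iff [_ [_ [p2 [Hp2 e2]]]] := ce_sym Y2.
  have /ce_iff [_ [_ [p3 [Hp3 e3]]]] := ce_sym Y3.
  have gP : inP g by rewrite e1 mulmx1.
  by split => //; split; [exists p2 | exists p3].
- move=> [Hg [[p2 [Hp2 e2]] [p3 [Hp3 e3]]]]; have HG := inP_G Hg.
  split => //; split; last split.
  + by apply: ce_sym; have := ce_P inG1 Hg; rewrite mulmx1.
  + by apply: ce_sym; rewrite e2; exact: ce_P.
  + by apply: ce_sym; rewrite e3; exact: ce_P.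
Qed.

End Gen.

Tactic Notation "gen" constr(A) "as" ident(a1) ident(a2) ident(a3) ident(a4) ident(a5) ident(a6) ident(a7) ident(a8) ident(a9) :=
  case: (mx3_ex A) => a1 [a2 [a3 [a4 [a5 [a6 [a7 [a8 [a9 ->]]]]]]]].
Ltac nzs := try done; repeat (apply/andP; split); assumption.
Ltac inPt hd := split; [first [field; nzs | refine (eq_trans _ hd); field; nzs] | by do 2? split].
Ltac mxeq := rewrite ?mul_mx3; congr mx3; field; nzs.

Section CA.
Variable R : realType.
Notation M := 'M[R]_3.

Lemma z1conj (c1 c2 c3 c4 : R) :
  z1 *m mx3 c1 0 0 0 c2 c4 0 0 c3 = mx3 c2 c4 0 0 c3 0 0 0 c1 *m z1.
Proof. rewrite /z1 !mul_mx3; congr mx3; ring. Qed.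

Lemma nz_of (a b c : R) : a * b * c = 1 -> a != 0 /\ b != 0 /\ c != 0.
Proof.
move=> h; split; [|split]; apply/eqP => e; move: h; rewrite e ?mul0r ?mulr0 ?mul0r => /eqP;
  by rewrite eq_sym oner_eq0.
Qed.

Lemma cover_a (r : M) : inP r -> exists n,
  (n = nn 1 0 0 \/ n = nn 0 1 0 \/ n = nn 0 0 0) /\
  exists c p p', inP c /\ inP p /\ inP p' /\ z1 *m c = p' *m z1 /\ z1 *m r = p *m (z1 *m n) *m c.
Proof.
gen r as r11 r12 r13 r21 r22 r23 r31 r32 r33.
rewrite inP_mx3 => -[hd [-> [-> ->]]].
have [n1 [n2 n3]] := nz_of hd.
have [e12|n12] := eqVneq r12 0.
  have [e13|n13] := eqVneq r13 0.
    subst; exists (nn 0 0 0); split; first by right; right.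
    exists (mx3 1 0 0 0 1 0 0 0 1), (mx3 r22 r23 0 0 r33 0 0 0 r11), (mx3 1 0 0 0 1 0 0 0 1).
    rewrite !inP_mx3; do 3 (split; first by inPt hd).
    by split; rewrite /z1 /nn; mxeq.
  subst; exists (nn 0 1 0); split; first by right; left.
  exists (mx3 (r11/r13) 0 0 0 (r13/r11) 0 0 0 1), (mx3 (r22*r11/r13) r23 0 0 r33 0 0 0 r13),
         (mx3 (r13/r11) 0 0 0 1 0 0 0 (r11/r13)).
  rewrite !inP_mx3; do 3 (split; first by inPt hd).
  by split; rewrite /z1 /nn; mxeq.
exists (nn 1 0 0); split; first by left.
exists (mx3 (r11/r12) 0 0 0 1 (r13/r12) 0 0 (r12/r11)),
       (mx3 r22 ((r23 - r22*r13/r12)*r11/r12) 0 0 (r33*r11/r12) 0 0 0 r12),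
       (mx3 1 (r13/r12) 0 0 (r12/r11) 0 0 0 (r11/r12)).
rewrite !inP_mx3; do 3 (split; first by inPt hd).
by split; rewrite /z1 /nn; mxeq.
Qed.


Lemma one_mx3 : (1%:M : M) = mx3 1 0 0 0 1 0 0 0 1.
Proof.
by apply/matrixP => i j; rewrite !mxE; case: i => [[|[|[|i]]] Hi] //; case: j => [[|[|[|j]]] Hj].
Qed.

Lemma cover_b (r : M) : inP r -> exists n,
  (n = nn 0 1 0 \/ n = nn 0 0 0) /\
  exists c p p', inP c /\ inP p /\ inP p' /\ z1 *m c = p' *m z1 /\ z2 *m r = p *m (z2 *m n) *m c.
Proof.
gen r as r11 r12 r13 r21 r22 r23 r31 r32 r33.
rewrite inP_mx3 => -[hd [-> [-> ->]]].
have [n1 [n2 n3]] := nz_of hd.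
have [m em] : exists m, r13 = m + r12*r23/r22 by exists (r13 - r12*r23/r22); field.
rewrite em.
have [e|nm] := eqVneq m 0.
  subst; exists (nn 0 0 0); split; first by right.
  exists (mx3 1 0 0 0 1 (r23/r22) 0 0 1), (mx3 r33 0 0 0 r11 r12 0 0 r22), (mx3 1 (r23/r22) 0 0 1 0 0 0 1).
  rewrite !inP_mx3; do 3 (split; first by inPt hd).
  by split; rewrite /z1 /z2 /nn; mxeq.
exists (nn 0 1 0); split; first by left.
exists (mx3 (r11/m) 0 0 0 (m / r11) (r23 * m /(r11*r22)) 0 0 1),
       (mx3 r33 0 0 0 m (r12*r11/m) 0 0 (r22*r11/m)),
       (mx3 (m / r11) (r23 * m /(r11*r22)) 0 0 1 0 0 0 (r11/m)).
rewrite !inP_mx3; do 3 (split; first by inPt hd).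
by split; rewrite /z1 /z2 /nn; mxeq.
Qed.

Lemma cover_c (r : M) : inP r -> exists n,
  (n = nn 1 0 0 \/ n = nn 0 0 0) /\
  exists c p p', inP c /\ inP p /\ inP p' /\ z1 *m c = p' *m z1 /\ s1 *m r = p *m (s1 *m n) *m c.
Proof.
gen r as r11 r12 r13 r21 r22 r23 r31 r32 r33.
rewrite inP_mx3 => -[hd [-> [-> ->]]].
have [n1 [n2 n3]] := nz_of hd.
have [e|n12] := eqVneq r12 0.
  subst; exists (nn 0 0 0); split; first by right.
  exists (mx3 1 0 0 0 1 0 0 0 1), (mx3 r22 0 (-r23) 0 r11 (-r13) 0 0 r33), (mx3 1 0 0 0 1 0 0 0 1).
  rewrite !inP_mx3; do 3 (split; first by inPt hd).
  by split; rewrite /z1 /s1 /nn; mxeq.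
exists (nn 1 0 0); split; first by left.
exists (mx3 (r11/r12) 0 0 0 1 0 0 0 (r12/r11)),
       (mx3 r22 0 (-(r23*r11/r12)) 0 r12 (-(r13*r11/r12)) 0 0 (r33*r11/r12)),
       (mx3 1 0 0 0 (r12/r11) 0 0 0 (r11/r12)).
rewrite !inP_mx3; do 3 (split; first by inPt hd).
by split; rewrite /z1 /s1 /nn; mxeq.
Qed.

Lemma cover_d (r : M) : inP r -> exists n,
  n = 1%:M /\
  exists c p p', inP c /\ inP p /\ inP p' /\ z1 *m c = p' *m z1 /\ s2 *m r = p *m (s2 *m n) *m c.
Proof.
gen r as r11 r12 r13 r21 r22 r23 r31 r32 r33.
rewrite inP_mx3 => -[hd [-> [-> ->]]].
have [n1 [n2 n3]] := nz_of hd.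
exists 1%:M; split => //; rewrite one_mx3.
exists (mx3 1 0 0 0 1 (r23/r22) 0 0 1),
       (mx3 r11 (-(r13 - r12*r23/r22)) (-r12) 0 r33 0 0 0 r22),
       (mx3 1 (r23/r22) 0 0 1 0 0 0 1).
rewrite !inP_mx3; do 3 (split; first by inPt hd).
by split; rewrite /z1 /s2; mxeq.
Qed.

Lemma cover_e (r : M) : inP r -> exists n,
  n = 1%:M /\
  exists c p p', inP c /\ inP p /\ inP p' /\ z1 *m c = p' *m z1 /\ 1%:M *m r = p *m (1%:M *m n) *m c.
Proof.
move=> Hr; exists 1%:M; split => //; exists 1%:M, r, 1%:M.
do 3 (split; first exact: inP_1 || exact: Hr).
by rewrite !mulmx1 !mul1mx.
Qed.

End CA.

Ltac kill c1 c2 c3 nc1 nc2 nc3 :=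
  first [ (have : c1 = 0 by lra); move/eqP; apply/negP; exact nc1
        | (have : c2 = 0 by lra); move/eqP; apply/negP; exact nc2
        | (have : c3 = 0 by lra); move/eqP; apply/negP; exact nc3 ].

Ltac disj_tac :=
  let c1 := fresh "c1" in let c2 := fresh "c2" in let c3 := fresh "c3" in
  let nc1 := fresh "nc1" in let nc2 := fresh "nc2" in let nc3 := fresh "nc3" in
  let hc := fresh "hc" in let ec := fresh "ec" in
  let c := fresh "c" in let p := fresh "p" in let p' := fresh "p'" in
  let Hc := fresh "Hc" in let Hp := fresh "Hp" in let Hp' := fresh "Hp'" in
  let e1 := fresh "e1" in let e2 := fresh "e2" in
  move=> c p p' Hc Hp Hp' e1 e2;
  have [c1 [c2 [c3 [c4 [ec hc]]]]] := shapeB Hc Hp e1; subst c;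
  have [nc1 [nc2 nc3]] := nz_of hc;
  move: Hp' e2;
  gen p' as q11 q12 q13 q21 q22 q23 q31 q32 q33;
  rewrite inP_mx3 /z1 /z2 /s1 /nn !mul_mx3 => -[hp [-> [-> ->]]] /mx3_inj;
  move=> [f1 [f2 [f3 [f4 [f5 [f6 [f7 [f8 f9]]]]]]]];
  kill c1 c2 c3 nc1 nc2 nc3.

Section CB.
Variable R : realType.
Notation M := 'M[R]_3.

Lemma shapeB (c p : M) : inP c -> inP p -> z1 *m c = p *m z1 ->
  exists c1 c2 c3 c4, c = mx3 c1 0 0 0 c2 c4 0 0 c3 /\ c1 * c2 * c3 = 1.
Proof.
gen c as c11 c12 c13 c21 c22 c23 c31 c32 c33.
gen p as p11 p12 p13 p21 p22 p23 p31 p32 p33.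
rewrite !inP_mx3 /z1 !mul_mx3 => -[hc [-> [-> ->]]] [hp [-> [-> ->]]] /mx3_inj.
move=> [e1 [e2 [e3 [e4 [e5 [e6 [e7 [e8 e9]]]]]]]].
have -> : c12 = 0 by lra.
have -> : c13 = 0 by lra.
by exists c11, c22, c33, c23.
Qed.


Lemma disj_a1 : Gorbit (pt z1 (z1 *m nn 1 0 0)) `&` Gorbit (pt z1 (z1 *m nn 0 1 0)) = set0 :> set (triple R).
Proof. apply: orbit_disj; disj_tac. Qed.
Lemma disj_a2 : Gorbit (pt z1 (z1 *m nn 1 0 0)) `&` Gorbit (pt z1 (z1 *m nn 0 0 0)) = set0 :> set (triple R).
Proof. apply: orbit_disj; disj_tac. Qed.
Lemma disj_a3 : Gorbit (pt z1 (z1 *m nn 0 1 0)) `&` Gorbit (pt z1 (z1 *m nn 0 0 0)) = set0 :> set (triple R).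
Proof. apply: orbit_disj; disj_tac. Qed.
Lemma disj_b : Gorbit (pt z1 (z2 *m nn 0 1 0)) `&` Gorbit (pt z1 (z2 *m nn 0 0 0)) = set0 :> set (triple R).
Proof. apply: orbit_disj; disj_tac. Qed.
Lemma disj_c : Gorbit (pt z1 (s1 *m nn 1 0 0)) `&` Gorbit (pt z1 (s1 *m nn 0 0 0)) = set0 :> set (triple R).
Proof. apply: orbit_disj; disj_tac. Qed.

End CB.

Section CC.
Variable R : realType.
Notation M := 'M[R]_3.

Lemma inG_z1 : inG (z1 : M). Proof. rewrite /z1 inG_mx3; ring. Qed.
Lemma inG_z2 : inG (z2 : M). Proof. rewrite /z2 inG_mx3; ring. Qed.
Lemma inG_s1 : inG (s1 : M). Proof. rewrite /s1 inG_mx3; ring. Qed.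
Lemma inG_s2 : inG (s2 : M). Proof. rewrite /s2 inG_mx3; ring. Qed.
Lemma inP_nn (x y z : R) : inP (nn x y z). Proof. rewrite /nn inP_mx3; do ! split; ring. Qed.
Lemma inG_nn (x y z : R) : inG (nn x y z). Proof. exact: inP_G (inP_nn x y z). Qed.

Lemma stab_B1 (u g : M) : inG u ->
  (stab (pt z1 u) g <-> exists c1 c2 c3 c4, g = mx3 c1 0 0 0 c2 c4 0 0 c3 /\ c1 * c2 * c3 = 1 /\
       exists q, inP q /\ u *m g = q *m u).
Proof.
move=> Hu; rewrite (stab_iff _ inG_z1 Hu); split.
- move=> [Hg [[p [Hp e]] Hq]].
  have [c1 [c2 [c3 [c4 [ec hc]]]]] := shapeB Hg Hp e.
  by exists c1, c2, c3, c4.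
- move=> [c1 [c2 [c3 [c4 [-> [hc Hq]]]]]]; split; last split => //.
  + by rewrite inP_mx3; do ! split => //.
  + exists (mx3 c2 c4 0 0 c3 0 0 0 c1); split; last exact: z1conj.
    by rewrite inP_mx3; do ! split => //; rewrite -hc; ring.
Qed.

Lemma q_of (u ui g : M) : ui *m u = 1%:M -> u *m g = (u *m g *m ui) *m u.
Proof. by move=> H; rewrite -mulmxA H mulmx1. Qed.

Definition z1t : M := mx3 0 0 1 (-1) 0 0 0 (-1) 0.

Lemma inD_mx3 (a11 a12 a13 a21 a22 a23 a31 a32 a33 : R) :
  inD (mx3 a11 a12 a13 a21 a22 a23 a31 a32 a33) <->
  (a11 * a22 * a33 = 1 /\ a12 = 0 /\ a13 = 0 /\ a21 = 0 /\ a23 = 0 /\ a31 = 0 /\ a32 = 0).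
Proof.
rewrite /inD /inG det_mx3; split.
- move=> [Hd Hl].
  have h01 := Hl i0 i1 isT; have h02 := Hl i0 i2 isT; have h10 := Hl i1 i0 isT.
  have h12 := Hl i1 i2 isT; have h20 := Hl i2 i0 isT; have h21 := Hl i2 i1 isT.
  move: h01 h02 h10 h12 h20 h21; rewrite !mxE /= => h01 h02 h10 h12 h20 h21.
  subst; do ! split => //; rewrite -Hd; ring.
- move=> [Hd [h01 [h02 [h10 [h12 [h20 h21]]]]]]; subst; split.
  + rewrite -Hd; ring.
  + move=> i j; rewrite mxE.
    by case: i => [[|[|[|i]]] Hi] //; case: j => [[|[|[|j]]] Hj] //=.
Qed.

Lemma B1_DN (g : M) : (exists c1 c2 c3 c4, g = mx3 c1 0 0 0 c2 c4 0 0 c3 /\ c1 * c2 * c3 = 1) <->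
  (exists d x, inD d /\ g = d *m nn 0 0 x).
Proof.
split.
- move=> [c1 [c2 [c3 [c4 [-> hc]]]]]; have [n1 [n2 n3]] := nz_of hc.
  exists (mx3 c1 0 0 0 c2 0 0 0 c3), (c4 / c2); split.
  + by rewrite inD_mx3; do ! split.
  + rewrite /nn; mxeq.
- move=> [d [x [Hd ->]]]; move: Hd; gen d as d11 d12 d13 d21 d22 d23 d31 d32 d33.
  rewrite inD_mx3 => -[hd [-> [-> [-> [-> [-> ->]]]]]].
  exists d11, d22, d33, (d22 * x); split => //; rewrite /nn mul_mx3; congr mx3; ring.
Qed.

Lemma B1_D (g : M) : (exists c1 c2 c3 c4, g = mx3 c1 0 0 0 c2 c4 0 0 c3 /\ c1 * c2 * c3 = 1 /\ c4 = 0) <->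
  inD g.
Proof.
split.
- by move=> [c1 [c2 [c3 [c4 [-> [hc ->]]]]]]; rewrite inD_mx3; do ! split.
- gen g as d11 d12 d13 d21 d22 d23 d31 d32 d33.
  rewrite inD_mx3 => -[hd [-> [-> [-> [-> [-> ->]]]]]].
  by exists d11, d22, d33, 0.
Qed.

End CC.
Arguments z1t {R}.


Ltac qP hc := rewrite /z1 /z2 /s1 /s2 /z1t /nn /dd ?one_mx3 !mul_mx3 inP_mx3; split;
  [first [field; nzs | refine (eq_trans _ hc); field; nzs] | do 2? split; field; nzs].
Ltac qE := rewrite /z1 /z2 /s1 /s2 /z1t /nn ?one_mx3 !mul_mx3; congr mx3; ring.

Section CD.
Variable R : realType.
Notation M := 'M[R]_3.

Lemma inv2 (a c : R) : a * a * c = 1 -> c = a ^- 2.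
Proof.
move=> h; have [na _] := nz_of h.
by apply: (@mulfI _ (a * a)); [rewrite mulf_neq0 | rewrite h; field].
Qed.

Lemma stab_a1 : stab (pt z1 (z1 *m nn 1 0 0)) = [set g : M | exists a : R, a != 0 /\ g = dd a a (a ^- 2)].
Proof.
have Hu : inG (z1 *m nn 1 0 0 : M) by apply: inG_mul; [exact: inG_z1 | exact: inG_nn].
apply/seteqP; split => g.
- move=> /(stab_B1 _ Hu) [c1 [c2 [c3 [c4 [-> [hc [q [Hq e]]]]]]]].
  have [nc1 [nc2 nc3]] := nz_of hc.
  move: Hq e; gen q as q11 q12 q13 q21 q22 q23 q31 q32 q33.
  rewrite inP_mx3 /z1 /z2 /s1 /s2 /nn ?one_mx3 !mul_mx3 => -[hq [-> [-> ->]]] /mx3_inj.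
  move=> [f1 [f2 [f3 [f4 [f5 [f6 [f7 [f8 f9]]]]]]]].
  have e2 : c2 = c1 by lra. have e4 : c4 = 0 by lra. subst.
  exists c1; split => //; rewrite /dd; congr mx3; exact: inv2.
- move=> [a [na ->]]; apply/(stab_B1 _ Hu); exists a, a, (a ^- 2), 0.
  split; first by []. split; first by field.
  exists ((z1 *m nn 1 0 0) *m dd a a (a ^- 2) *m (nn (-1) 0 0 *m z1t)); split; first by qP na.
  by apply: q_of; qE.
Qed.

Lemma stab_a2 : stab (pt z1 (z1 *m nn 0 1 0)) = [set g : M | exists a x : R, a != 0 /\ g = mx3 a 0 0 0 (a ^- 2) x 0 0 a].
Proof.
have Hu : inG (z1 *m nn 0 1 0 : M) by rewrite ?mulmx1; (apply: inG_mul; [|exact: inG_nn]) || idtac; first [exact: inG_z1 | exact: inG_z2 | exact: inG_s1 | exact: inG_s2 | exact: inG1].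
apply/seteqP; split => g.
- move=> /(stab_B1 _ Hu) [c1 [c2 [c3 [c4 [-> [hc [q [Hq e]]]]]]]].
  have [nc1 [nc2 nc3]] := nz_of hc.
  move: Hq e; gen q as q11 q12 q13 q21 q22 q23 q31 q32 q33.
  rewrite inP_mx3 /z1 /z2 /s1 /s2 /nn ?one_mx3 !mul_mx3 => -[hq [-> [-> ->]]] /mx3_inj.
  move=> [f1 [f2 [f3 [f4 [f5 [f6 [f7 [f8 f9]]]]]]]].
  have e3 : c3 = c1 by lra. subst.
  exists c1, c4; split => //; congr mx3; apply: inv2; rewrite -hc; ring.
- move=> [a [x [na eg]]]; apply/(stab_B1 _ Hu); exists a, (a ^- 2), a, x.
  split; first exact eg. split; first by field. have hc : a * a ^- 2 * a = 1 by field.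
  exists ((z1 *m nn 0 1 0) *m g *m (nn 0 (-1) 0 *m z1t)); split; first by rewrite eg; qP hc.
  by apply: q_of; qE.
Qed.

Lemma stab_a3 : stab (pt z1 (z1 *m nn 0 0 0)) = [set g : M | exists d x, inD d /\ g = d *m nn 0 0 x].
Proof.
have Hu : inG (z1 *m nn 0 0 0 : M) by rewrite ?mulmx1; (apply: inG_mul; [|exact: inG_nn]) || idtac; first [exact: inG_z1 | exact: inG_z2 | exact: inG_s1 | exact: inG_s2 | exact: inG1].
apply/seteqP; split => g.
- move=> /(stab_B1 _ Hu) [c1 [c2 [c3 [c4 [-> [hc [q [Hq e]]]]]]]].
  have [nc1 [nc2 nc3]] := nz_of hc.
  move: Hq e; gen q as q11 q12 q13 q21 q22 q23 q31 q32 q33.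
  rewrite inP_mx3 /z1 /z2 /s1 /s2 /nn ?one_mx3 !mul_mx3 => -[hq [-> [-> ->]]] /mx3_inj.
  move=> [f1 [f2 [f3 [f4 [f5 [f6 [f7 [f8 f9]]]]]]]].

  by apply/B1_DN; exists c1, c2, c3, c4.
- move/B1_DN => [c1 [c2 [c3 [c4 [eg hc]]]]]; apply/(stab_B1 _ Hu); exists c1, c2, c3, c4.
  split; first exact eg. split => //; have [nc1 [nc2 nc3]] := nz_of hc.
  exists ((z1 *m nn 0 0 0) *m g *m (nn 0 0 0 *m z1t)); split; first by rewrite eg; qP hc.
  by apply: q_of; qE.
Qed.

Lemma stab_b1 : stab (pt z1 (z2 *m nn 0 1 0)) = [set g : M | exists a : R, a != 0 /\ g = dd a (a ^- 2) a].
Proof.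
have Hu : inG (z2 *m nn 0 1 0 : M) by rewrite ?mulmx1; (apply: inG_mul; [|exact: inG_nn]) || idtac; first [exact: inG_z1 | exact: inG_z2 | exact: inG_s1 | exact: inG_s2 | exact: inG1].
apply/seteqP; split => g.
- move=> /(stab_B1 _ Hu) [c1 [c2 [c3 [c4 [-> [hc [q [Hq e]]]]]]]].
  have [nc1 [nc2 nc3]] := nz_of hc.
  move: Hq e; gen q as q11 q12 q13 q21 q22 q23 q31 q32 q33.
  rewrite inP_mx3 /z1 /z2 /s1 /s2 /nn ?one_mx3 !mul_mx3 => -[hq [-> [-> ->]]] /mx3_inj.
  move=> [f1 [f2 [f3 [f4 [f5 [f6 [f7 [f8 f9]]]]]]]].
  have e3 : c3 = c1 by lra. have e4 : c4 = 0 by lra. subst.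
  exists c1; split => //; rewrite /dd; congr mx3; apply: inv2; rewrite -hc; ring.
- move=> [a [na eg]]; apply/(stab_B1 _ Hu); exists a, (a ^- 2), a, 0.
  split; first exact eg. split; first by field. have hc : a * a ^- 2 * a = 1 by field.
  exists ((z2 *m nn 0 1 0) *m g *m (nn 0 (-1) 0 *m z1)); split; first by rewrite eg; qP hc.
  by apply: q_of; qE.
Qed.

Lemma stab_b2 : stab (pt z1 (z2 *m nn 0 0 0)) = inD (R := R).
Proof.
have Hu : inG (z2 *m nn 0 0 0 : M) by rewrite ?mulmx1; (apply: inG_mul; [|exact: inG_nn]) || idtac; first [exact: inG_z1 | exact: inG_z2 | exact: inG_s1 | exact: inG_s2 | exact: inG1].
apply/seteqP; split => g.
- move=> /(stab_B1 _ Hu) [c1 [c2 [c3 [c4 [-> [hc [q [Hq e]]]]]]]].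
  have [nc1 [nc2 nc3]] := nz_of hc.
  move: Hq e; gen q as q11 q12 q13 q21 q22 q23 q31 q32 q33.
  rewrite inP_mx3 /z1 /z2 /s1 /s2 /nn ?one_mx3 !mul_mx3 => -[hq [-> [-> ->]]] /mx3_inj.
  move=> [f1 [f2 [f3 [f4 [f5 [f6 [f7 [f8 f9]]]]]]]].
  have e4 : c4 = 0 by lra. subst.
  by apply/B1_D; exists c1, c2, c3, 0.
- move/B1_D => [c1 [c2 [c3 [c4 [eg [hc e4]]]]]]; subst c4; apply/(stab_B1 _ Hu); exists c1, c2, c3, 0.
  split; first exact eg. split => //; have [nc1 [nc2 nc3]] := nz_of hc.
  exists ((z2 *m nn 0 0 0) *m g *m (nn 0 0 0 *m z1)); split; first by rewrite eg; qP hc.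
  by apply: q_of; qE.
Qed.

Lemma stab_c1 : stab (pt z1 (s1 *m nn 1 0 0)) = [set g : M | exists a x : R, a != 0 /\ g = mx3 a 0 0 0 a x 0 0 (a ^- 2)].
Proof.
have Hu : inG (s1 *m nn 1 0 0 : M) by rewrite ?mulmx1; (apply: inG_mul; [|exact: inG_nn]) || idtac; first [exact: inG_z1 | exact: inG_z2 | exact: inG_s1 | exact: inG_s2 | exact: inG1].
apply/seteqP; split => g.
- move=> /(stab_B1 _ Hu) [c1 [c2 [c3 [c4 [-> [hc [q [Hq e]]]]]]]].
  have [nc1 [nc2 nc3]] := nz_of hc.
  move: Hq e; gen q as q11 q12 q13 q21 q22 q23 q31 q32 q33.
  rewrite inP_mx3 /z1 /z2 /s1 /s2 /nn ?one_mx3 !mul_mx3 => -[hq [-> [-> ->]]] /mx3_inj.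
  move=> [f1 [f2 [f3 [f4 [f5 [f6 [f7 [f8 f9]]]]]]]].
  have e2 : c2 = c1 by lra. subst.
  exists c1, c4; split => //; congr mx3; apply: inv2; rewrite -hc; ring.
- move=> [a [x [na eg]]]; apply/(stab_B1 _ Hu); exists a, a, (a ^- 2), x.
  split; first exact eg. split; first by field. have hc : a * a * a ^- 2 = 1 by field.
  exists ((s1 *m nn 1 0 0) *m g *m (nn (-1) 0 0 *m s1)); split; first by rewrite eg; qP hc.
  by apply: q_of; qE.
Qed.

Lemma stab_c2 : stab (pt z1 (s1 *m nn 0 0 0)) = [set g : M | exists d x, inD d /\ g = d *m nn 0 0 x].
Proof.
have Hu : inG (s1 *m nn 0 0 0 : M) by rewrite ?mulmx1; (apply: inG_mul; [|exact: inG_nn]) || idtac; first [exact: inG_z1 | exact: inG_z2 | exact: inG_s1 | exact: inG_s2 | exact: inG1].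
apply/seteqP; split => g.
- move=> /(stab_B1 _ Hu) [c1 [c2 [c3 [c4 [-> [hc [q [Hq e]]]]]]]].
  have [nc1 [nc2 nc3]] := nz_of hc.
  move: Hq e; gen q as q11 q12 q13 q21 q22 q23 q31 q32 q33.
  rewrite inP_mx3 /z1 /z2 /s1 /s2 /nn ?one_mx3 !mul_mx3 => -[hq [-> [-> ->]]] /mx3_inj.
  move=> [f1 [f2 [f3 [f4 [f5 [f6 [f7 [f8 f9]]]]]]]].

  by apply/B1_DN; exists c1, c2, c3, c4.
- move/B1_DN => [c1 [c2 [c3 [c4 [eg hc]]]]]; apply/(stab_B1 _ Hu); exists c1, c2, c3, c4.
  split; first exact eg. split => //; have [nc1 [nc2 nc3]] := nz_of hc.
  exists ((s1 *m nn 0 0 0) *m g *m (nn 0 0 0 *m s1)); split; first by rewrite eg; qP hc.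
  by apply: q_of; qE.
Qed.

Lemma stab_d : stab (pt z1 (s2)) = inD (R := R).
Proof.
have Hu : inG (s2 : M) by rewrite ?mulmx1; (apply: inG_mul; [|exact: inG_nn]) || idtac; first [exact: inG_z1 | exact: inG_z2 | exact: inG_s1 | exact: inG_s2 | exact: inG1].
apply/seteqP; split => g.
- move=> /(stab_B1 _ Hu) [c1 [c2 [c3 [c4 [-> [hc [q [Hq e]]]]]]]].
  have [nc1 [nc2 nc3]] := nz_of hc.
  move: Hq e; gen q as q11 q12 q13 q21 q22 q23 q31 q32 q33.
  rewrite inP_mx3 /z1 /z2 /s1 /s2 /nn ?one_mx3 !mul_mx3 => -[hq [-> [-> ->]]] /mx3_inj.
  move=> [f1 [f2 [f3 [f4 [f5 [f6 [f7 [f8 f9]]]]]]]].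
  have e4 : c4 = 0 by lra. subst.
  by apply/B1_D; exists c1, c2, c3, 0.
- move/B1_D => [c1 [c2 [c3 [c4 [eg [hc e4]]]]]]; subst c4; apply/(stab_B1 _ Hu); exists c1, c2, c3, 0.
  split; first exact eg. split => //; have [nc1 [nc2 nc3]] := nz_of hc.
  exists ((s2) *m g *m (s2)); split; first by rewrite eg; qP hc.
  by apply: q_of; qE.
Qed.

Lemma stab_e : stab (pt z1 (1%:M)) = [set g : M | exists d x, inD d /\ g = d *m nn 0 0 x].
Proof.
have Hu : inG (1%:M : M) by rewrite ?mulmx1; (apply: inG_mul; [|exact: inG_nn]) || idtac; first [exact: inG_z1 | exact: inG_z2 | exact: inG_s1 | exact: inG_s2 | exact: inG1].
apply/seteqP; split => g.
- move=> /(stab_B1 _ Hu) [c1 [c2 [c3 [c4 [-> [hc [q [Hq e]]]]]]]].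
  have [nc1 [nc2 nc3]] := nz_of hc.
  move: Hq e; gen q as q11 q12 q13 q21 q22 q23 q31 q32 q33.
  rewrite inP_mx3 /z1 /z2 /s1 /s2 /nn ?one_mx3 !mul_mx3 => -[hq [-> [-> ->]]] /mx3_inj.
  move=> [f1 [f2 [f3 [f4 [f5 [f6 [f7 [f8 f9]]]]]]]].

  by apply/B1_DN; exists c1, c2, c3, c4.
- move/B1_DN => [c1 [c2 [c3 [c4 [eg hc]]]]]; apply/(stab_B1 _ Hu); exists c1, c2, c3, c4.
  split; first exact eg. split => //; have [nc1 [nc2 nc3]] := nz_of hc.
  exists ((1%:M) *m g *m (1%:M)); split; first by rewrite eg; qP hc.
  by apply: q_of; qE.
Qed.

End CD.

Section LA.
Variable R : realType.
Notation M := 'M[R]_3.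

Lemma cvg_uniq (f : nat -> R) (a b : R) : f @ \oo --> a -> f @ \oo --> b -> a = b.
Proof. move=> Ha Hb; apply: (cvg_unique _ Ha Hb); exact: norm_hausdorff. Qed.

Lemma cvg_ext (f g : nat -> R) (a : R) : (forall k, f k = g k) -> g @ \oo --> a -> f @ \oo --> a.
Proof. by move=> e; have -> : f = g by apply/funext. Qed.

Lemma cvg_c (f : nat -> R) (a : R) : (forall k, f k = a) -> f @ \oo --> a.
Proof. move=> e; apply: (@cvg_ext _ (fun _ => a)) => //; exact: cvg_cst. Qed.

Lemma cvg_add (f g : nat -> R) (a b : R) : f @ \oo --> a -> g @ \oo --> b ->
  (fun k => f k + g k) @ \oo --> a + b.
Proof. exact: cvgD. Qed.

Lemma cvg_mul (f g : nat -> R) (a b : R) : f @ \oo --> a -> g @ \oo --> b ->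
  (fun k => f k * g k) @ \oo --> a * b.
Proof. exact: cvgM. Qed.

Lemma cvg_opp (f : nat -> R) (a : R) : f @ \oo --> a -> (fun k => - f k) @ \oo --> - a.
Proof. exact: cvgN. Qed.

Lemma cvg_inv (f : nat -> R) (a : R) : a != 0 -> f @ \oo --> a -> (fun k => (f k)^-1) @ \oo --> a^-1.
Proof. exact: cvgV. Qed.

Definition hh (k : nat) : R := (k.+1%:R)^-1.
Lemma hh_gt0 k : 0 < hh k. Proof. exact: harmonic_gt0. Qed.
Lemma hh_cvg : hh @ \oo --> (0 : R). Proof. exact: cvg_harmonic. Qed.
Lemma hh_neq0 k : hh k != 0. Proof. by rewrite gt_eqF // hh_gt0. Qed.
Lemma hh1_neq0 k : 1 + hh k != 0. Proof. by rewrite gt_eqF // ltr_wpDr // ?hh_gt0 // ltW // hh_gt0. Qed.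

Lemma cvg_inv1h : (fun k => (1 + hh k)^-1) @ \oo --> (1 : R).
Proof.
rewrite -[X in _ --> X]invr1; apply: cvg_inv; first exact: oner_neq0.
rewrite -[X in _ --> X]addr0; apply: cvg_add; [exact: cvg_cst | exact: hh_cvg].
Qed.

End LA.

Section LB.
Variable R : realType.
Notation M := 'M[R]_3.

Lemma one_ii (i : 'I_3) : (1%:M : M) i i = 1. Proof. by rewrite mxE eqxx. Qed.
Lemma one_ij (i j : 'I_3) : i != j -> (1%:M : M) i j = 0. Proof. by move=> h; rewrite mxE (negbTE h). Qed.

Lemma lie_zero (H : set M) i j X : (forall u, H u -> u i j = (1%:M : M) i j) -> lie H X -> X i j = 0.
Proof.
move=> Hz [u [t [Hu [Ht [Ht0 Hc]]]]].
apply: (cvg_uniq (Hc i j)); apply: cvg_c => k; by rewrite Hz // subrr mul0r.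
Qed.

Lemma lie_eqe (H : set M) i j i' j' X :
  (forall u, H u -> u i j - (1%:M : M) i j = u i' j' - (1%:M : M) i' j') -> lie H X -> X i j = X i' j'.
Proof.
move=> Hz [u [t [Hu [Ht [Ht0 Hc]]]]].
apply: (cvg_uniq (Hc i j)); apply: cvg_ext (Hc i' j') => k; by rewrite Hz.
Qed.

Lemma tr_alg (a b c t : R) : t != 0 -> a * b * c = 1 ->
  (a - 1) / t + (b - 1) / t + (c - 1) / t =
  - (t * ((a - 1) / t * ((b - 1) / t) + (a - 1) / t * ((c - 1) / t) + (b - 1) / t * ((c - 1) / t))
     + t * t * ((a - 1) / t * ((b - 1) / t) * ((c - 1) / t))).
Proof.
move=> nt h; apply/eqP; rewrite -subr_eq0; apply/eqP.
transitivity ((a * b * c - 1) / t); first by field.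
by rewrite h subrr mul0r.
Qed.

Lemma lie_tr (H : set M) X : (forall u, H u -> u i0 i0 * u i1 i1 * u i2 i2 = 1) -> lie H X ->
  X i0 i0 + X i1 i1 + X i2 i2 = 0.
Proof.
move=> Hd [u [t [Hu [Ht [Ht0 Hc]]]]].
have E0 := Hc i0 i0; have E1 := Hc i1 i1; have E2 := Hc i2 i2.
rewrite !one_ii in E0 E1 E2.
have P := cvg_add (cvg_add (cvg_mul E0 E1) (cvg_mul E0 E2)) (cvg_mul E1 E2).
have Q := cvg_mul (cvg_mul E0 E1) E2.
have R1 := cvg_opp (cvg_add (cvg_mul Ht0 P) (cvg_mul (cvg_mul Ht0 Ht0) Q)).
have S := cvg_add (cvg_add E0 E1) E2.
have R2 := @cvg_ext R (fun k => (u k i0 i0 - 1) / t k + (u k i1 i1 - 1) / t k + (u k i2 i2 - 1) / t k) _ _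
   (fun k => tr_alg (lt0r_neq0 (Ht k)) (Hd _ (Hu k))) R1.
rewrite (cvg_uniq S R2); ring.
Qed.

Lemma lie_of (H : set M) (X : M) (u : nat -> M) : (forall k, H (u k)) ->
  (forall i j, (fun k => (u k i j - (1%:M : M) i j) / hh R k) @ \oo --> X i j) -> lie H X.
Proof.
move=> Hu Hc; exists u, (hh R); split => //; split; first exact: hh_gt0.
split => //; exact: hh_cvg.
Qed.

Lemma cvg_tr (f : nat -> R) (a b : R) : f @ \oo --> a -> a = b -> f @ \oo --> b.
Proof. by move=> h <-. Qed.

Lemma set_dimP (S : set M) (B : seq M) : free B -> (forall X, X \in B -> S X) ->
  (forall X, S X -> (X \in <<B>>)%VS) -> set_dim S (size B).
Proof.
move=> fB HB HS; split; first by exists B.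
move=> s fs Hs; rewrite -(eqP fs); apply: leq_trans (dim_span B); apply: dimvS.
by apply/span_subvP => X /Hs /HS.
Qed.

Lemma scale_mx3 (k a11 a12 a13 a21 a22 a23 a31 a32 a33 : R) :
  k *: mx3 a11 a12 a13 a21 a22 a23 a31 a32 a33 = mx3 (k*a11) (k*a12) (k*a13) (k*a21) (k*a22) (k*a23) (k*a31) (k*a32) (k*a33).
Proof.
apply/matrixP => i j; rewrite !mxE.
by case: i => [[|[|[|i]]] Hi] //; case: j => [[|[|[|j]]] Hj] //=.
Qed.

Lemma add_mx3 (a11 a12 a13 a21 a22 a23 a31 a32 a33 b11 b12 b13 b21 b22 b23 b31 b32 b33 : R) :
  mx3 a11 a12 a13 a21 a22 a23 a31 a32 a33 + mx3 b11 b12 b13 b21 b22 b23 b31 b32 b33 =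
  mx3 (a11+b11) (a12+b12) (a13+b13) (a21+b21) (a22+b22) (a23+b23) (a31+b31) (a32+b32) (a33+b33).
Proof.
apply/matrixP => i j; rewrite !mxE.
by case: i => [[|[|[|i]]] Hi] //; case: j => [[|[|[|j]]] Hj] //=.
Qed.

Lemma zero_mx3 : (0 : M) = mx3 0 0 0 0 0 0 0 0 0.
Proof.
apply/matrixP => i j; rewrite !mxE.
by case: i => [[|[|[|i]]] Hi] //; case: j => [[|[|[|j]]] Hj] //=.
Qed.

Lemma free1 (x : M) : x != 0 -> free [:: x].
Proof.
move=> nx; rewrite free_cons span_nil memv0 nx /=.
by rewrite /free span_nil dimv0.
Qed.

Lemma notin2 (x y z : M) : (forall k l, x <> k *: y + l *: z) -> x \notin <<[:: y; z]>>%VS.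
Proof.
move=> H; apply/negP; rewrite span_cons span_seq1 => /memv_addP [a /vlineP [k ->] [b /vlineP [l ->] e]].
exact: (H k l).
Qed.

Lemma notin1 (x y : M) : (forall k, x <> k *: y) -> x \notin <<[:: y]>>%VS.
Proof.
move=> H; apply/negP; rewrite span_seq1 => /vlineP [k e]; exact: (H k).
Qed.

Lemma in_span1 (x y : M) k : x = k *: y -> x \in <<[:: y]>>%VS.
Proof. by move=> ->; apply: memvZ; apply: memv_span; rewrite inE. Qed.

Lemma in_span2 (x y z : M) k l : x = k *: y + l *: z -> x \in <<[:: y; z]>>%VS.
Proof.
move=> ->; apply: memvD; apply: memvZ; apply: memv_span; by rewrite !inE eqxx ?orbT.
Qed.

Lemma in_span3 (x y z w : M) k l m : x = k *: y + l *: z + m *: w -> x \in <<[:: y; z; w]>>%VS.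
Proof.
move=> ->; apply: memvD; [apply: memvD|]; apply: memvZ; apply: memv_span; by rewrite !inE eqxx ?orbT.
Qed.

Lemma invsq (x : R) : (x^-1) ^- 2 = x ^+ 2. Proof. by rewrite exprVn invrK. Qed.

Lemma cvg_2h : (fun k => 2 + hh R k) @ \oo --> (2 : R).
Proof.
have H := cvg_add (cvg_cst (2 : R)) (@hh_cvg R).
rewrite addr0 in H. exact: H.
Qed.
Lemma cvg_mi : (fun k => - (1 + hh R k)^-1) @ \oo --> (-1 : R).
Proof. have H := cvg_opp (@cvg_inv1h R). exact: H. Qed.
Lemma cvg_1mi : (fun k => 1 + - (1 + hh R k)^-1) @ \oo --> (0 : R).
Proof. have H := cvg_add (cvg_cst (1 : R)) cvg_mi. rewrite subrr in H. exact: H. Qed.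
End LB.

Arguments hh_cvg {R}. Arguments cvg_mi {R}. Arguments cvg_1mi {R}. Arguments cvg_2h {R}. Arguments cvg_inv1h {R}. Arguments hh_neq0 {R}. Arguments hh1_neq0 {R}.

Ltac hnz := try done; repeat (apply/andP; split); first [exact: hh_neq0 | exact: hh1_neq0 | exact: oner_neq0].
Ltac ent := first
  [ solve [apply: cvg_c => k; rewrite !mxE /=; field; hnz]
  | solve [apply: (cvg_ext (g := fun k => - (1 + hh _ k)^-1)); [move=> k; rewrite !mxE /= ?invsq; field; hnz | apply: cvg_tr; [exact: cvg_mi | rewrite !mxE /=; ring]]]
  | solve [apply: (cvg_ext (g := fun k => 1 + - (1 + hh _ k)^-1)); [move=> k; rewrite !mxE /= ?invsq; field; hnz | apply: cvg_tr; [exact: cvg_1mi | rewrite !mxE /=; ring]]]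
  | solve [apply: (cvg_ext (g := fun k => 2 + hh _ k)); [move=> k; rewrite !mxE /= ?invsq; field; hnz | apply: cvg_tr; [exact: cvg_2h | rewrite !mxE /=; ring]]] ].
Ltac ents := move=> [[|[|[|?]]] ?] [[|[|[|?]]] ?] //; ent.

Section LC.
Variable R : realType.
Notation M := 'M[R]_3.

Definition Da : M := mx3 (-1) 0 0 0 (-1) 0 0 0 2.
Definition Db : M := mx3 (-1) 0 0 0 2 0 0 0 (-1).
Definition E23 : M := mx3 0 0 0 0 0 1 0 0 0.
Definition D1 : M := mx3 1 0 0 0 (-1) 0 0 0 0.
Definition D2 : M := mx3 0 0 0 0 1 0 0 0 (-1).

Lemma lie_shape (H : set M) X :
  (forall u, H u -> exists c1 c2 c3 c4, u = mx3 c1 0 0 0 c2 c4 0 0 c3 /\ c1 * c2 * c3 = 1) ->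
  lie H X -> X = mx3 (X i0 i0) 0 0 0 (X i1 i1) (X i1 i2) 0 0 (-(X i0 i0 + X i1 i1)).
Proof.
move=> Hs HX.
have Z : forall i j, i != j -> (forall c1 c2 c3 c4 : R, mx3 c1 0 0 0 c2 c4 0 0 c3 i j = 0) ->
    X i j = 0.
  move=> i j nij Hz; apply: (lie_zero _ HX) => u /Hs [c1 [c2 [c3 [c4 [-> _]]]]].
  by rewrite Hz one_ij.
have h01 : X i0 i1 = 0 by apply: Z => // *; rewrite mxE.
have h02 : X i0 i2 = 0 by apply: Z => // *; rewrite mxE.
have h10 : X i1 i0 = 0 by apply: Z => // *; rewrite mxE.
have h20 : X i2 i0 = 0 by apply: Z => // *; rewrite mxE.
have h21 : X i2 i1 = 0 by apply: Z => // *; rewrite mxE.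
have ht : X i0 i0 + X i1 i1 + X i2 i2 = 0.
  apply: (lie_tr _ HX) => u /Hs [c1 [c2 [c3 [c4 [-> h]]]]]; by rewrite !mxE.
rewrite {1}(mx3_eta X) h01 h02 h10 h20 h21; congr mx3; lra.
Qed.

Lemma nz_mx3 (a11 a12 a13 a21 a22 a23 a31 a32 a33 : R) :
  a11 != 0 \/ a22 != 0 \/ a23 != 0 -> mx3 a11 a12 a13 a21 a22 a23 a31 a32 a33 != 0.
Proof.
move=> h; apply/eqP; rewrite zero_mx3 => /mx3_inj [e1 [_ [_ [_ [e5 [e6 _]]]]]].
by move: h; rewrite e1 e5 e6 eqxx; case=> [|[|]].
Qed.


Let h k := hh R k.

Lemma dim_S1 : set_dim (lie [set g : M | exists a : R, a != 0 /\ g = dd a a (a ^- 2)]) 1.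
Proof.
have HS : forall u, [set g : M | exists a : R, a != 0 /\ g = dd a a (a ^- 2)] u ->
   exists c1 c2 c3 c4, u = mx3 c1 0 0 0 c2 c4 0 0 c3 /\ c1 * c2 * c3 = 1.
  by move=> u [a [na ->]]; exists a, a, (a ^- 2), 0; split => //; field.
apply: (set_dimP (B := [:: Da])).
- by apply: free1; apply: nz_mx3; left; rewrite oppr_eq0 oner_neq0.
- move=> X; rewrite inE => /eqP ->.
  apply: (lie_of (u := fun k => dd ((1 + hh R k)^-1) ((1 + hh R k)^-1) (((1 + hh R k)^-1) ^- 2))).
  + by move=> k; exists ((1 + hh R k)^-1); split => //; rewrite invr_neq0 // hh1_neq0.
  + rewrite /Da /dd; ents.
- move=> X HX; have eX := lie_shape HS HX.
  have c1 : X i0 i0 = X i1 i1 by apply: (lie_eqe _ HX) => u [a [na ->]]; rewrite !mxE /=.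
  have c2 : X i1 i2 = 0 by apply: (lie_zero _ HX) => u [a [na ->]]; rewrite !mxE.
  rewrite eX; apply: (in_span1 (k := - X i0 i0)); rewrite /Da scale_mx3; congr mx3; lra.
Qed.

Lemma dim_S2 : set_dim (lie [set g : M | exists a x : R, a != 0 /\ g = mx3 a 0 0 0 (a ^- 2) x 0 0 a]) 2.
Proof.
have HS : forall u, [set g : M | exists a x : R, a != 0 /\ g = mx3 a 0 0 0 (a ^- 2) x 0 0 a] u ->
   exists c1 c2 c3 c4, u = mx3 c1 0 0 0 c2 c4 0 0 c3 /\ c1 * c2 * c3 = 1.
  by move=> u [a [x [na ->]]]; exists a, (a ^- 2), a, x; split => //; field.
apply: (set_dimP (B := [:: Db; E23])).
- rewrite free_cons; apply/andP; split.
  + by apply: notin1 => k; rewrite /Db /E23 scale_mx3 => /mx3_inj [e _]; lra.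
  + by apply: free1; apply: nz_mx3; right; right; rewrite oner_neq0.
- move=> X; rewrite !inE => /orP [/eqP -> | /eqP ->].
  + apply: (lie_of (u := fun k => mx3 (1 + hh R k)^-1 0 0 0 ((1 + hh R k)^-1 ^- 2) 0 0 0 (1 + hh R k)^-1)).
    * by move=> k; exists (1 + hh R k)^-1, 0; split => //; rewrite invr_neq0 // hh1_neq0.
    * rewrite /Db; ents.
  + apply: (lie_of (u := fun k => mx3 1 0 0 0 (1 ^- 2) (hh R k) 0 0 1)).
    * by move=> k; exists 1, (hh R k); split => //; rewrite oner_neq0.
    * rewrite /E23; ents.
- move=> X HX; have eX := lie_shape HS HX.
  have ht : X i2 i2 = -(X i0 i0 + X i1 i1) by rewrite {1}eX mxE.
  have c1 : X i0 i0 = X i2 i2 by apply: (lie_eqe _ HX) => u [a [x [na ->]]]; rewrite !mxE /=.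
  rewrite eX; apply: (in_span2 (k := - X i0 i0) (l := X i1 i2)).
  rewrite /Db /E23 !scale_mx3 add_mx3; congr mx3; lra.
Qed.

Lemma dim_Sb1 : set_dim (lie [set g : M | exists a : R, a != 0 /\ g = dd a (a ^- 2) a]) 1.
Proof.
have HS : forall u, [set g : M | exists a : R, a != 0 /\ g = dd a (a ^- 2) a] u ->
   exists c1 c2 c3 c4, u = mx3 c1 0 0 0 c2 c4 0 0 c3 /\ c1 * c2 * c3 = 1.
  by move=> u [a [na ->]]; exists a, (a ^- 2), a, 0; split => //; field.
apply: (set_dimP (B := [:: Db])).
- by apply: free1; apply: nz_mx3; left; rewrite oppr_eq0 oner_neq0.
- move=> X; rewrite inE => /eqP ->.
  apply: (lie_of (u := fun k => dd (1 + hh R k)^-1 ((1 + hh R k)^-1 ^- 2) (1 + hh R k)^-1)).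
  + by move=> k; exists (1 + hh R k)^-1; split => //; rewrite invr_neq0 // hh1_neq0.
  + rewrite /Db /dd; ents.
- move=> X HX; have eX := lie_shape HS HX.
  have ht : X i2 i2 = -(X i0 i0 + X i1 i1) by rewrite {1}eX mxE.
  have c1 : X i0 i0 = X i2 i2 by apply: (lie_eqe _ HX) => u [a [na ->]]; rewrite !mxE /=.
  have c2 : X i1 i2 = 0 by apply: (lie_zero _ HX) => u [a [na ->]]; rewrite !mxE.
  rewrite eX; apply: (in_span1 (k := - X i0 i0)); rewrite /Db scale_mx3; congr mx3; lra.
Qed.

Lemma dim_Sc1 : set_dim (lie [set g : M | exists a x : R, a != 0 /\ g = mx3 a 0 0 0 a x 0 0 (a ^- 2)]) 2.
Proof.
have HS : forall u, [set g : M | exists a x : R, a != 0 /\ g = mx3 a 0 0 0 a x 0 0 (a ^- 2)] u ->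
   exists c1 c2 c3 c4, u = mx3 c1 0 0 0 c2 c4 0 0 c3 /\ c1 * c2 * c3 = 1.
  by move=> u [a [x [na ->]]]; exists a, a, (a ^- 2), x; split => //; field.
apply: (set_dimP (B := [:: Da; E23])).
- rewrite free_cons; apply/andP; split.
  + by apply: notin1 => k; rewrite /Da /E23 scale_mx3 => /mx3_inj [e _]; lra.
  + by apply: free1; apply: nz_mx3; right; right; rewrite oner_neq0.
- move=> X; rewrite !inE => /orP [/eqP -> | /eqP ->].
  + apply: (lie_of (u := fun k => mx3 (1 + hh R k)^-1 0 0 0 (1 + hh R k)^-1 0 0 0 ((1 + hh R k)^-1 ^- 2))).
    * by move=> k; exists (1 + hh R k)^-1, 0; split => //; rewrite invr_neq0 // hh1_neq0.
    * rewrite /Da; ents.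
  + apply: (lie_of (u := fun k => mx3 1 0 0 0 1 (hh R k) 0 0 (1 ^- 2))).
    * by move=> k; exists 1, (hh R k); split => //; rewrite oner_neq0.
    * rewrite /E23; ents.
- move=> X HX; have eX := lie_shape HS HX.
  have ht : X i2 i2 = -(X i0 i0 + X i1 i1) by rewrite {1}eX mxE.
  have c1 : X i0 i0 = X i1 i1 by apply: (lie_eqe _ HX) => u [a [x [na ->]]]; rewrite !mxE /=.
  rewrite eX; apply: (in_span2 (k := - X i0 i0) (l := X i1 i2)).
  rewrite /Da /E23 !scale_mx3 add_mx3; congr mx3; lra.
Qed.

Lemma dim_DN : set_dim (lie [set g : M | exists d x, inD d /\ g = d *m nn 0 0 x]) 3.
Proof.
have HS : forall u, [set g : M | exists d x, inD d /\ g = d *m nn 0 0 x] u ->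
   exists c1 c2 c3 c4, u = mx3 c1 0 0 0 c2 c4 0 0 c3 /\ c1 * c2 * c3 = 1.
  by move=> u Hu; apply/B1_DN.
apply: (set_dimP (B := [:: D1; D2; E23])).
- rewrite free_cons; apply/andP; split.
  + by apply: notin2 => k l; rewrite /D1 /D2 /E23 !scale_mx3 add_mx3 => /mx3_inj [e _]; lra.
  rewrite free_cons; apply/andP; split.
  + by apply: notin1 => k; rewrite /D2 /E23 scale_mx3 => /mx3_inj [_ [_ [_ [_ [e _]]]]]; lra.
  + by apply: free1; apply: nz_mx3; right; right; rewrite oner_neq0.
- move=> X; rewrite !inE => /orP [/eqP -> | /orP [/eqP -> | /eqP ->]].
  + apply: (lie_of (u := fun k => mx3 (1 + hh R k) 0 0 0 (1 + hh R k)^-1 0 0 0 1)).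
    * move=> k; apply/B1_DN; exists (1 + hh R k), (1 + hh R k)^-1, 1, 0; split => //.
      by field; rewrite hh1_neq0.
    * rewrite /D1; ents.
  + apply: (lie_of (u := fun k => mx3 1 0 0 0 (1 + hh R k) 0 0 0 (1 + hh R k)^-1)).
    * move=> k; apply/B1_DN; exists 1, (1 + hh R k), (1 + hh R k)^-1, 0; split => //.
      by field; rewrite hh1_neq0.
    * rewrite /D2; ents.
  + apply: (lie_of (u := fun k => mx3 1 0 0 0 1 (hh R k) 0 0 1)).
    * move=> k; apply/B1_DN; exists 1, 1, 1, (hh R k); split => //; ring.
    * rewrite /E23; ents.
- move=> X HX; have eX := lie_shape HS HX.
  have ht : X i2 i2 = -(X i0 i0 + X i1 i1) by rewrite {1}eX mxE.
  rewrite eX; apply: (in_span3 (k := X i0 i0) (l := X i0 i0 + X i1 i1) (m := X i1 i2)).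
  rewrite /D1 /D2 /E23 !scale_mx3 !add_mx3; congr mx3; lra.
Qed.

Lemma dim_D : set_dim (lie (inD (R := R))) 2.
Proof.
have HS : forall u : M, inD (R := R) u ->
   exists c1 c2 c3 c4, u = mx3 c1 0 0 0 c2 c4 0 0 c3 /\ c1 * c2 * c3 = 1.
  move=> u Hu; have [c1 [c2 [c3 [c4 [e [hc _]]]]]] := proj2 (B1_D u) Hu; by exists c1, c2, c3, c4.
apply: (set_dimP (B := [:: D1; D2])).
- rewrite free_cons; apply/andP; split.
  + by apply: notin1 => k; rewrite /D1 /D2 scale_mx3 => /mx3_inj [e _]; lra.
  + by apply: free1; apply: nz_mx3; right; left; rewrite oner_neq0.
- move=> X; rewrite !inE => /orP [/eqP -> | /eqP ->].
  + apply: (lie_of (u := fun k => mx3 (1 + hh R k) 0 0 0 (1 + hh R k)^-1 0 0 0 1)).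
    * move=> k; rewrite inD_mx3; do ! split.
      by field; rewrite hh1_neq0.
    * rewrite /D1; ents.
  + apply: (lie_of (u := fun k => mx3 1 0 0 0 (1 + hh R k) 0 0 0 (1 + hh R k)^-1)).
    * move=> k; rewrite inD_mx3; do ! split.
      by field; rewrite hh1_neq0.
    * rewrite /D2; ents.
- move=> X HX; have eX := lie_shape HS HX.
  have ht : X i2 i2 = -(X i0 i0 + X i1 i1) by rewrite {1}eX mxE.
  have c2 : X i1 i2 = 0.
    apply: (lie_zero _ HX) => u Hu; have [c1 [c2 [c3 [c4 [-> [hc ->]]]]]] := proj2 (B1_D u) Hu; by rewrite !mxE.
  rewrite eX; apply: (in_span2 (k := X i0 i0) (l := X i0 i0 + X i1 i1)).
  rewrite /D1 /D2 !scale_mx3 add_mx3; congr mx3; lra.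
Qed.

End LC.

Unset Implicit Arguments.

Theorem mainTheorem9 (R : realType) :
  let O (v w n : 'M[R]_3) := Gorbit (pt v (w *m n)) in
  let St (v w n : 'M[R]_3) := stab (pt v (w *m n)) in
  let Dim (v w n : 'M[R]_3) (d : nat) := orbit_dim (pt v (w *m n)) d in
  let DN := [set g : 'M[R]_3 | exists d x, inD d /\ g = d *m nn 0 0 x] in
  (* (a) *)
  (cell z1 z1 = O z1 z1 (nn 1 0 0) `|` O z1 z1 (nn 0 1 0) `|` O z1 z1 (nn 0 0 0)
   /\ O z1 z1 (nn 1 0 0) `&` O z1 z1 (nn 0 1 0) = set0
   /\ O z1 z1 (nn 1 0 0) `&` O z1 z1 (nn 0 0 0) = set0
   /\ O z1 z1 (nn 0 1 0) `&` O z1 z1 (nn 0 0 0) = set0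
   /\ Dim z1 z1 (nn 1 0 0) 7%N
   /\ St z1 z1 (nn 1 0 0) = [set g | exists a : R, a != 0 /\ g = dd a a (a ^- 2)]
   /\ Dim z1 z1 (nn 0 1 0) 6%N
   /\ St z1 z1 (nn 0 1 0) =
        [set g | exists a x : R, a != 0 /\ g = mx3 a 0 0 0 (a ^- 2) x 0 0 a]
   /\ Dim z1 z1 (nn 0 0 0) 5%N
   /\ St z1 z1 (nn 0 0 0) = DN) /\
  (* (b) *)
  (cell z1 z2 = O z1 z2 (nn 0 1 0) `|` O z1 z2 (nn 0 0 0)
   /\ O z1 z2 (nn 0 1 0) `&` O z1 z2 (nn 0 0 0) = set0
   /\ Dim z1 z2 (nn 0 1 0) 7%N
   /\ St z1 z2 (nn 0 1 0) = [set g | exists a : R, a != 0 /\ g = dd a (a ^- 2) a]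
   /\ Dim z1 z2 (nn 0 0 0) 6%N
   /\ St z1 z2 (nn 0 0 0) = inD (R := R)) /\
  (* (c) *)
  (cell z1 s1 = O z1 s1 (nn 1 0 0) `|` O z1 s1 (nn 0 0 0)
   /\ O z1 s1 (nn 1 0 0) `&` O z1 s1 (nn 0 0 0) = set0
   /\ Dim z1 s1 (nn 1 0 0) 6%N
   /\ St z1 s1 (nn 1 0 0) =
        [set g | exists a x : R, a != 0 /\ g = mx3 a 0 0 0 a x 0 0 (a ^- 2)]
   /\ Dim z1 s1 (nn 0 0 0) 5%N
   /\ St z1 s1 (nn 0 0 0) = DN) /\
  (* (d) *)
  (cell (@z1 R) s2 = Gorbit (pt (@z1 R) s2)
   /\ orbit_dim (pt (@z1 R) s2) 6%N
   /\ stab (pt (@z1 R) s2) = inD (R := R)) /\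
  (* (e) *)
  (cell (@z1 R) 1%:M = Gorbit (pt (@z1 R) 1%:M)
   /\ orbit_dim (pt (@z1 R) 1%:M) 5%N
   /\ stab (pt (@z1 R) 1%:M) = DN).
Proof.
move=> O St Dim DN; rewrite /O /St /Dim /DN /orbit_dim.
have HN3 : forall n : 'M[R]_3, n = nn 1 0 0 \/ n = nn 0 1 0 \/ n = nn 0 0 0 -> inG n.
  by move=> n [->|[->|->]]; exact: inG_nn.
have HN2a : forall n : 'M[R]_3, n = nn 0 1 0 \/ n = nn 0 0 0 -> inG n.
  by move=> n [->|->]; exact: inG_nn.
have HN2c : forall n : 'M[R]_3, n = nn 1 0 0 \/ n = nn 0 0 0 -> inG n.
  by move=> n [->|->]; exact: inG_nn.
have HN1 : forall n : 'M[R]_3, n = 1%:M -> inG n by move=> n ->; exact: (@inG1 R).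
split; [|split; [|split; [|split]]].
- split.
    apply/seteqP; split => y.
      move=> /(cell_sub (@inG_z1 R) (@inG_z1 R) HN3 (@cover_a R)) [n [[->|[->|->]] Hy]].
      + by left; left.
      + by left; right.
      + by right.
    by move=> [[Hy|Hy]|Hy]; exact: (orbit_sub_cell (@inG_z1 R) (@inG_z1 R) (inP_nn _ _ _) Hy).
  split; first exact: disj_a1.
  split; first exact: disj_a2.
  split; first exact: disj_a3.
  split; first by rewrite stab_a1; exists 1%N; split => //; exact: dim_S1.
  split; first exact: stab_a1.
  split; first by rewrite stab_a2; exists 2%N; split => //; exact: dim_S2.
  split; first exact: stab_a2.
  split; first by rewrite stab_a3; exists 3%N; split => //; exact: dim_DN.
  exact: stab_a3.
- split.
    apply/seteqP; split => y.
      move=> /(cell_sub (@inG_z1 R) (@inG_z2 R) HN2a (@cover_b R)) [n [[->|->] Hy]].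
      + by left.
      + by right.
    by move=> [Hy|Hy]; exact: (orbit_sub_cell (@inG_z1 R) (@inG_z2 R) (inP_nn _ _ _) Hy).
  split; first exact: disj_b.
  split; first by rewrite stab_b1; exists 1%N; split => //; exact: dim_Sb1.
  split; first exact: stab_b1.
  split; first by rewrite stab_b2; exists 2%N; split => //; exact: dim_D.
  exact: stab_b2.
- split.
    apply/seteqP; split => y.
      move=> /(cell_sub (@inG_z1 R) (@inG_s1 R) HN2c (@cover_c R)) [n [[->|->] Hy]].
      + by left.
      + by right.
    by move=> [Hy|Hy]; exact: (orbit_sub_cell (@inG_z1 R) (@inG_s1 R) (inP_nn _ _ _) Hy).
  split; first exact: disj_c.
  split; first by rewrite stab_c1; exists 2%N; split => //; exact: dim_Sc1.
  split; first exact: stab_c1.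
  split; first by rewrite stab_c2; exists 3%N; split => //; exact: dim_DN.
  exact: stab_c2.
- split.
    apply/seteqP; split => y.
      by move=> /(cell_sub (@inG_z1 R) (@inG_s2 R) HN1 (@cover_d R)) [n [-> Hy]]; rewrite mulmx1 in Hy.
    by move=> Hy; apply: (orbit_sub_cell (@inG_z1 R) (@inG_s2 R) inP_1); rewrite mulmx1.
  split; first by rewrite stab_d; exists 2%N; split => //; exact: dim_D.
  exact: stab_d.
- split.
    apply/seteqP; split => y.
      by move=> /(cell_sub (@inG_z1 R) (@inG1 R) HN1 (@cover_e R)) [n [-> Hy]]; rewrite mulmx1 in Hy.
    by move=> Hy; apply: (orbit_sub_cell (@inG_z1 R) (@inG1 R) inP_1); rewrite mulmx1.
  split; first by rewrite stab_e; exists 3%N; split => //; exact: dim_DN.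
  exact: stab_e.
Qed.
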